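(* For all $N\in\mathbb{N}$, $|\mathcal{D}_6(N)|=\frac18\,\#\{(x,y)\in\mathbb{Z}^2\mid x^2+y^2=12N+5\}$.
   Context: A bar partition is an integer partition $\lambda=(\lambda_1>\lambda_2>\dots>\lambda_r>0)$ with distinct parts; its size is $\sum\lambda_k$. Its double distinct partition $\widetilde\lambda$ is the partition with Frobenius coordinates $(\lambda_1,\dots,\lambda_r\mid\lambda_1-1,\dots,\lambda_r-1)$ (obtained by shifting row $k$ of the Young diagram of $\lambda$ by $k$ steps to the right and completing by the transpose of this shifted diagram). A partition is a $6$-core if none of its hook lengths equals $6$. $\mathcal{D}_6(N)$ is the set of bar partitions $\lambda$ of size $N$ with no part equal to $3$ such that $\widetilde\lambda$ is a $6$-core. *)

(* Defs.v *)
From mathcomp Require Import all_boot all_order all_algebra.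
Set Implicit Arguments. Unset Strict Implicit. Unset Printing Implicit Defensive.

(* Partitions are represented as weakly decreasing seq nat of positive parts;
   rows/columns are 0-indexed internally. *)

Definition is_bar_partition (l : seq nat) : bool :=
  sorted gtn l && all (fun x => 0 < x) l.

Definition conj_part (mu : seq nat) (j : nat) : nat := count (fun x => j < x) mu.

Definition hook (mu : seq nat) (i j : nat) : nat :=
  (nth 0 mu i - j.+1) + (conj_part mu j - i.+1) + 1.

Definition is_core (t : nat) (mu : seq nat) : bool :=
  all (fun i => all (fun j => hook mu i j != t) (iota 0 (nth 0 mu i)))
      (iota 0 (size mu)).

(* Double distinct partition: the partition with Frobenius coordinates
   (l_1,...,l_r | l_1 - 1, ..., l_r - 1).  With 0-indexed rows, row i has
   [i < r] * (alpha_i + 1) cells on/right of the diagonal, plus one cell in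
   column j < min(i,r) whenever i - j <= beta_j. *)
Definition double_distinct (l : seq nat) : seq nat :=
  filter (fun x => 0 < x)
    [seq (i < size l) * (nth 0 l i).+1
         + count (fun j => i <= (nth 0 l j).-1 + j) (iota 0 (minn i (size l)))
    | i <- iota 0 (sumn l + size l)].

Definition inD6 (N : nat) (l : seq nat) : bool :=
  [&& is_bar_partition l, sumn l == N, 3 \notin l & is_core 6 (double_distinct l)].

(* A bar partition of N is the decreasing listing of a finite set of
   positive integers (each <= N); we count such sets. *)
Definition bar_of (N : nat) (A : {set 'I_N.+1}) : seq nat :=
  sort geq [seq val i | i <- enum A].

Definition D6 (N : nat) : {set {set 'I_N.+1}} :=
  [set A | inD6 N (bar_of A)].

(* number of (x,y) in Z^2 with x^2 + y^2 = n; any solution has |x|,|y| <= n *)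
Definition int_range (M : nat) : seq int :=
  [seq (i%:Z - M%:Z)%R | i <- iota 0 (2 * M).+1].

Definition r2 (n : nat) : nat :=
  count (fun p : int * int => (p.1 ^+ 2 + p.2 ^+ 2 == n%:Z)%R)
        [seq (x, y) | x <- int_range n, y <- int_range n].

(* Main.v *)
Require Import Defs.
From mathcomp Require Import all_boot all_order all_algebra.
From mathcomp Require Import zify.
Set Implicit Arguments. Unset Strict Implicit. Unset Printing Implicit Defensive.
Import GRing.Theory Num.Theory.

Ltac fixsz := change (Equality.sort Datatypes_nat__canonical__eqtype_Equality) with nat in *.
Ltac slia := fixsz; lia.

Lemma bar_step l s t : is_bar_partition l -> s < t < size l -> nth 0 l t < nth 0 l s.
Proof.
case/andP=> hs _ /andP[st tl].
have := sorted_ltn_nth (leT:=gtn) _ 0 hs.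
move=> H; apply: (H _ s t) => //=; last by apply: ltn_trans tl.
by move=> x y z /= h1 h2; apply: ltn_trans h1.
Qed.

Lemma bar_gap l s t : is_bar_partition l -> s <= t -> t < size l ->
  nth 0 l t + (t - s) <= nth 0 l s.
Proof.
move=> hl st; elim: t st => [|t IH] st tl.
  have -> : s = 0 by lia.
  by rewrite subnn addn0.
case: (ltnP s t.+1) => h; last first.
  have -> : s = t.+1 by lia.
  by rewrite subnn addn0.
have h1 := IH (ltac:(lia)) (ltac:(lia)).
have h2 := @bar_step l t t.+1 hl (ltac:(lia)).
lia.
Qed.

Lemma bar_pos l t : is_bar_partition l -> t < size l -> 0 < nth 0 l t.
Proof.
case/andP=> _ /allP H tl; apply: H; exact: mem_nth.
Qed.

Lemma bar_low l t : is_bar_partition l -> t < size l -> size l - t <= nth 0 l t.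
Proof.
move=> hl tl.
have h1 := bar_gap (t:=(size l).-1) hl (_ : t <= (size l).-1) (ltac:(lia)).
have h2 := bar_pos hl (_ : (size l).-1 < size l).
have := h1 ltac:(lia); have := h2 ltac:(lia); lia.
Qed.

Lemma cnt_prefix (P : pred nat) r :
  (forall s t, s <= t -> t < r -> P t -> P s) ->
  forall t, t < r -> P t = (t < count P (iota 0 r)).
Proof.
elim: r => [|r IH] dc t //.
rewrite (_ : iota 0 r.+1 = iota 0 r ++ [:: r]); last by rewrite -addn1 iotaD.
rewrite count_cat /= addn0.
have dc' : forall s t, s <= t -> t < r -> P t -> P s.
  by move=> s u h1 h2; apply: dc h1 _; lia.
case Pr: (P r) => tr.
  have allP : forall u, u < r -> P u by move=> u ur; apply: (dc u r) => //; lia.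
  have : count P (iota 0 r) = r.
    rewrite (eq_in_count (a2:=predT)) ?count_predT ?size_iota //.
    by move=> u; rewrite mem_iota => /andP[_ ]; rewrite add0n => /allP.
  move=> ->; rewrite addn1 ltnS; case: (ltnP t r) => h; first by rewrite allP.
  have -> : t = r by lia.
  by rewrite Pr leqnn.
rewrite addn0; case: (ltnP t r) => h; first by apply: IH.
have -> : t = r by lia.
rewrite Pr; apply/esym/negbTE; rewrite -leqNgt.
by rewrite (leq_trans (count_size _ _)) ?size_iota.
Qed.

Lemma count_iota_le P r : count P (iota 0 r) <= r.
Proof. by rewrite (leq_trans (count_size _ _)) ?size_iota. Qed.

Definition kk (l : seq nat) j := count (fun t => j <= nth 0 l t + t) (iota 0 (size l)).
Definition fr (l : seq nat) i := (i < size l) * (nth 0 l i).+1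
  + count (fun j => i <= (nth 0 l j).-1 + j) (iota 0 (minn i (size l))).
Definition MM (l : seq nat) := maxn (size l) (nth 0 l 0).

Lemma kk_prefix l j t : is_bar_partition l -> t < size l ->
  (j <= nth 0 l t + t) = (t < kk l j).
Proof.
move=> hl tl; rewrite /kk; apply: (cnt_prefix (P := fun t => j <= nth 0 l t + t)) => //.
move=> s u su ul /= h; have := bar_gap hl su ul; lia.
Qed.

Lemma kk_le l j : kk l j <= size l.
Proof. exact: count_iota_le. Qed.

Lemma fr_lt l i : is_bar_partition l -> i < size l -> fr l i = nth 0 l i + i + 1.
Proof.
move=> hl il; rewrite /fr il mul1n.
have -> : minn i (size l) = i by lia.
rewrite (eq_in_count (a2 := predT)) ?count_predT ?size_iota; first by lia.
move=> j; rewrite mem_iota add0n => /andP[_ ji] /=.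
have := bar_gap hl (ltnW ji) il; have := bar_pos hl il; lia.
Qed.

Lemma fr_ge l i : is_bar_partition l -> size l <= i -> fr l i = kk l i.+1.
Proof.
move=> hl il; rewrite /fr ltnNge il mul0n add0n.
have -> : minn i (size l) = size l by lia.
apply: eq_in_count => j; rewrite mem_iota add0n => /andP[_ jl] /=.
have := bar_pos hl jl; lia.
Qed.

Lemma elem_le_sumn (s : seq nat) x : x \in s -> x <= sumn s.
Proof.
elim: s => //= y s IH; rewrite inE => /orP[/eqP ->|/IH]; lia.
Qed.

Lemma fr_pos l i : is_bar_partition l -> (0 < fr l i) = (i < MM l).
Proof.
move=> hl; rewrite /MM; case: (ltnP i (size l)) => il.
  rewrite fr_lt //; lia.
rewrite fr_ge //.
case: (posnP (size l)) => s0.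
  move/eqP: s0; rewrite size_eq0 => /eqP ->; rewrite /kk /=; lia.
have := kk_prefix i.+1 hl s0; rewrite addn0 => <-; lia.
Qed.

Lemma MM_le l : is_bar_partition l -> MM l <= sumn l + size l.
Proof.
move=> hl; rewrite /MM; case: (posnP (size l)) => s0.
  by move/eqP: s0; rewrite size_eq0 => /eqP ->.
have h := elem_le_sumn (mem_nth 0 s0).
by rewrite geq_max leq_addl /= (leq_trans h (leq_addr _ _)).
Qed.

Lemma filter_iota_lt M S : M <= S -> [seq i <- iota 0 S | i < M] = iota 0 M.
Proof.
move=> MS; rewrite -(subnKC MS) iotaD filter_cat.
rewrite (eq_in_filter (a2 := predT)); last by move=> x; rewrite mem_iota.
rewrite filter_predT (eq_in_filter (a2 := pred0)); last first.
  by move=> x; rewrite mem_iota /=; lia.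
by rewrite filter_pred0 cats0.
Qed.

Lemma dd_eq l : is_bar_partition l -> double_distinct l = map (fr l) (iota 0 (MM l)).
Proof.
move=> hl; rewrite /double_distinct.
rewrite (_ : [seq _ | i <- _] = map (fr l) (iota 0 (sumn l + size l))) //.
rewrite filter_map; congr map.
rewrite (eq_filter (a2 := fun i => i < MM l)); last by move=> i /=; rewrite fr_pos.
by rewrite filter_iota_lt // MM_le.
Qed.

Lemma count_lt_iota c m n : count (fun i => i < c) (iota m n) = minn (c - m) n.
Proof.
elim: n m => [|n IH] m /=; first by lia.
rewrite IH; lia.
Qed.

Lemma conj_lt l j : is_bar_partition l -> j < size l ->
  conj_part (double_distinct l) j = nth 0 l j + j.
Proof.
move=> hl jl; rewrite dd_eq // /conj_part count_map.
have rM : size l <= MM l by rewrite /MM leq_maxl.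
rewrite -(subnKC rM) iotaD count_cat.
rewrite (eq_in_count (a1 := preim _ _) (a2 := predT)); last first.
  move=> i; rewrite mem_iota add0n => /andP[_ il] /=.
  rewrite fr_lt //; have := bar_low hl il; lia.
rewrite count_predT size_iota add0n.
rewrite (eq_in_count (a2 := fun i => i < nth 0 l j + j)); last first.
  move=> i; rewrite mem_iota => /andP[ri _] /=.
  rewrite fr_ge // -(kk_prefix _ hl jl); lia.
rewrite count_lt_iota.
have := bar_low hl jl; have := bar_gap hl (leq0n j) jl.
rewrite /MM; lia.
Qed.

Lemma conj_ge l j : is_bar_partition l -> size l <= j ->
  conj_part (double_distinct l) j = kk l j.
Proof.
move=> hl jl; rewrite dd_eq // /conj_part count_map.
have rM : size l <= MM l by rewrite /MM leq_maxl.
rewrite -(subnKC rM) iotaD count_cat.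
rewrite [X in _ + X](eq_in_count (a2 := pred0)); last first.
  move=> i; rewrite mem_iota => /andP[ri _] /=.
  rewrite fr_ge //; have := kk_le l i.+1; lia.
rewrite count_pred0 addn0 /kk; apply: eq_in_count => i.
rewrite mem_iota add0n => /andP[_ il] /=; rewrite fr_lt //; lia.
Qed.

Lemma size_dd l : is_bar_partition l -> size (double_distinct l) = MM l.
Proof. by move=> hl; rewrite dd_eq // size_map size_iota. Qed.

Lemma nth_dd l i : is_bar_partition l -> i < MM l -> nth 0 (double_distinct l) i = fr l i.
Proof. by move=> hl iM; rewrite dd_eq // (nth_map 0) ?size_iota // nth_iota. Qed.

Lemma hook_ll l i j : is_bar_partition l -> i < size l -> j < size l ->
  hook (double_distinct l) i j = nth 0 l i + nth 0 l j.
Proof.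
move=> hl il jl; have iM : i < MM l by rewrite /MM; lia.
rewrite /hook nth_dd // fr_lt // conj_lt //.
have := bar_low hl il; have := bar_low hl jl; lia.
Qed.

Lemma hook_lg l i j : is_bar_partition l -> i < size l -> size l <= j ->
  j <= nth 0 l i + i ->
  hook (double_distinct l) i j + j = nth 0 l i + kk l j.
Proof.
move=> hl il jl ji; have iM : i < MM l by rewrite /MM; lia.
rewrite /hook nth_dd // fr_lt // conj_ge //.
have := kk_prefix j hl il; rewrite ji => /esym h; lia.
Qed.

Lemma hook_gl l i j : is_bar_partition l -> size l <= i -> i < MM l ->
  j < fr l i ->
  j < size l /\ hook (double_distinct l) i j + i.+1 = nth 0 l j + kk l i.+1.
Proof.
move=> hl il iM; rewrite fr_ge // => jk.
have jl : j < size l by have := kk_le l i.+1; lia.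
split => //.
rewrite /hook nth_dd // fr_ge // conj_lt //.
have := kk_prefix i.+1 hl jl; rewrite jk => h; lia.
Qed.

Lemma kk_notin l j : is_bar_partition l -> kk l j <= j -> (j - kk l j) \notin l.
Proof.
move=> hl kj; apply/negP => /(nthP 0) [t tl et].
have := kk_prefix j hl tl; rewrite et; case: (ltnP t (kk l j)) => h.
  move=> e; have : j <= j - kk l j + t by rewrite e. lia.
move=> e; have : ~~ (j <= j - kk l j + t) by rewrite e; lia. lia.
Qed.

Definition Qb (s : seq nat) := all (fun x => [&& x != 6, (6 < x) ==> (x - 6 \in s)
  & (x < 6) ==> (6 - x \notin s)]) s.

Lemma witness l i : is_bar_partition l -> i < size l -> 6 <= nth 0 l i ->
  (nth 0 l i - 6) \notin l ->
  exists j, j < fr l i /\ hook (double_distinct l) i j = 6.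
Proof.
move=> hl il a6 mnot.
set m := nth 0 l i - 6.
set k := count (fun t => m < nth 0 l t) (iota 0 (size l)).
have pre : forall t, t < size l -> (m < nth 0 l t) = (t < k).
  apply: cnt_prefix => s u su ul /= h; have := bar_gap hl su ul; lia.
have neq : forall t, t < size l -> nth 0 l t != m.
  move=> t tl; apply/eqP => e; move: mnot; rewrite -/m -e mem_nth //.
have kr : k <= size l by apply: count_iota_le.
have small : forall t, t < size l -> k <= t -> nth 0 l t < m.
  move=> t tl kt; have h1 := neq t tl.
  have h2 : ~~ (m < nth 0 l t) by rewrite pre // -leqNgt.
  lia.
have big : forall t, t < size l -> t < k -> m + k <= nth 0 l t + t.
  move=> t tl tk; have hk : m < nth 0 l k.-1 by rewrite pre //; lia.
  have := bar_gap hl (_ : t <= k.-1) (_ : k.-1 < size l).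
  move=> /(_ ltac:(lia) ltac:(lia)); lia.
have kkj : kk l (m + k) = k.
  rewrite /kk /k; apply: eq_in_count => t; rewrite mem_iota add0n => /andP[_ tl] /=.
  case: (ltnP t k) => tk.
    by rewrite pre // tk (big t tl tk).
  have sk := small k ltac:(lia) (leqnn k).
  have g := bar_gap hl tk tl.
  have h2 : ~~ (m < nth 0 l t) by rewrite pre // -leqNgt.
  apply/idP/idP => H; lia.
have rj : size l <= m + k.
  case: (ltnP k (size l)) => kl; last by lia.
  have := small k kl (leqnn k); have := bar_low hl kl; lia.
have ik : i < k by rewrite -pre //; lia.
have ji := big i il ik.
exists (m + k); split; first by rewrite fr_lt //; lia.
have := hook_lg hl il rj ji; rewrite kkj; lia.
Qed.

Lemma core_iff l : is_bar_partition l -> is_core 6 (double_distinct l) = Qb l.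
Proof.
move=> hl; apply/idP/idP.
  move=> hc.
  have cell : forall i j, i < MM l -> j < fr l i -> hook (double_distinct l) i j != 6.
    move=> i j iM jf; move/allP: hc => /(_ i); rewrite mem_iota size_dd // iM.
    move=> /(_ isT) /allP /(_ j); rewrite mem_iota nth_dd // jf; by move/(_ isT).
  apply/allP => _ /(nthP 0) [i il <-].
  have iM : i < MM l by apply: (leq_trans il); rewrite /MM leq_maxl.
  have wit : 6 <= nth 0 l i -> (nth 0 l i - 6) \notin l -> False.
    move=> h1 h2; have [j [jf hj]] := witness hl il h1 h2.
    by move: (cell i j iM jf); rewrite hj.
  apply/and3P; split.
  - apply/negP => /eqP e6; apply: wit; first by rewrite e6.
    rewrite e6 /=; apply/negP => /(nthP 0) [t tl et].
    by have := bar_pos hl tl; rewrite et.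
  - apply/implyP => h6; apply/negPn/negP => hn; apply: wit => //; first exact: ltnW.
  - apply/implyP => h6; apply/negP => /(nthP 0) [j jl ej].
    have jf : j < fr l i by rewrite fr_lt //; have := bar_low hl il; slia.
    by move: (cell i j iM jf); rewrite hook_ll // ej subnKC ?eqxx // ltnW.
move=> hq.
have Q : forall t, t < size l -> [&& nth 0 l t != 6, (6 < nth 0 l t) ==> (nth 0 l t - 6 \in l)
  & (nth 0 l t < 6) ==> (6 - nth 0 l t \notin l)].
  by move=> t tl; move/allP: hq; apply; rewrite mem_nth.
have bad : forall t y, t < size l -> y \notin l -> nth 0 l t = 6 + y -> False.
  move=> t y tl yn e; have /and3P[h1 h2 _] := Q t tl.
  case: (posnP y) => y0.
    by move: h1; rewrite e y0.
  move: h2; rewrite e (_ : 6 < 6 + y) ?addKn /=; last by lia.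
  by move: yn => /negbTE ->.
apply/allP => i; rewrite mem_iota size_dd // add0n => /andP[_ iM].
apply/allP => j; rewrite mem_iota nth_dd // add0n => /andP[_ jf].
apply/negP => /eqP h6.
case: (ltnP i (size l)) => il.
  case: (ltnP j (size l)) => jl.
    move: h6; rewrite hook_ll // => e.
    have /and3P[_ _ h3] := Q i il.
    have aj := bar_pos hl jl.
    move: h3; rewrite (_ : nth 0 l i < 6) /=; last by lia.
    by rewrite (_ : 6 - nth 0 l i = nth 0 l j) ?mem_nth //; lia.
  have ji : j <= nth 0 l i + i by move: jf; rewrite fr_lt //; lia.
  have := hook_lg hl il jl ji; rewrite h6 => e.
  have kj : kk l j <= j by have := kk_le l j; lia.
  apply: (bad i (j - kk l j) il (kk_notin hl kj)); lia.
have [jl e] := hook_gl hl il iM jf.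
move: e; rewrite h6 => e.
have kj : kk l i.+1 <= i.+1 by have := kk_le l i.+1; lia.
apply: (bad j (i.+1 - kk l i.+1) jl (kk_notin hl kj)); lia.
Qed.


Lemma Qb_perm s1 s2 : perm_eq s1 s2 -> Qb s1 = Qb s2.
Proof.
move=> p; rewrite /Qb (perm_all _ p); apply: eq_all => x.
by rewrite !(perm_mem p).
Qed.

Lemma all_pos_notin0 (s : seq nat) : all (fun x => 0 < x) s = (0 \notin s).
Proof. by elim: s => //= x s ->; rewrite inE negb_or; case: x. Qed.

Definition vals N (A : {set 'I_N.+1}) : seq nat := [seq val i | i <- enum A].

Lemma vals_uniq N (A : {set 'I_N.+1}) : uniq (vals A).
Proof. by rewrite map_inj_uniq ?enum_uniq //; apply: val_inj. Qed.

Lemma mem_vals N (A : {set 'I_N.+1}) v : (v \in vals A) = (v < N.+1) && (inord v \in A).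
Proof.
apply/mapP/andP => [[i] | [vN vA]].
  by rewrite mem_enum => iA ->; rewrite ltn_ord; split => //; rewrite inord_val.
exists (inord v); first by rewrite mem_enum.
by rewrite /= inordK.
Qed.

Lemma Qb_no3 s : Qb s -> 3 \notin s.
Proof.
move=> q; apply/negP => h3; move/allP: q => /(_ 3 h3) /and3P[_ _].
by rewrite /= h3.
Qed.

Lemma inD6_iff N (A : {set 'I_N.+1}) :
  inD6 N (bar_of A) = [&& 0 \notin vals A, sumn (vals A) == N & Qb (vals A)].
Proof.
rewrite /inD6 /bar_of -/(vals A).
have p : perm_eq (sort geq (vals A)) (vals A) by rewrite perm_sort.
have hb : is_bar_partition (sort geq (vals A)) = (0 \notin vals A).
  rewrite /is_bar_partition gtn_sorted_uniq_geq sort_uniq vals_uniq /=.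
  rewrite sort_sorted /=; last by move=> x y; apply: leq_total.
  by rewrite (perm_all _ p) all_pos_notin0.
rewrite hb (perm_sumn p) mem_sort.
case h0: (0 \in vals A) => //=.
rewrite core_iff ?hb ?h0 // (Qb_perm p).
case: (sumn (vals A) == N) => //=.
by case q: (Qb (vals A)); rewrite ?andbT ?andbF // (Qb_no3 q).
Qed.

Definition inEc (c1 c5 c2 c4 : nat) (x : nat) : bool :=
  [|| (x %% 6 == 1) && (x %/ 6 < c1), (x %% 6 == 5) && (x %/ 6 < c5),
      (x %% 6 == 2) && (x %/ 6 < c2) | (x %% 6 == 4) && (x %/ 6 < c4)].

Definition cr N (s : seq nat) r := count (fun t => 6 * t + r \in s) (iota 0 N.+1).

Lemma Qb_down (s : seq nat) r t : Qb s -> 6 * t + r \in s -> forall u, u <= t -> 6 * u + r \in s.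
Proof.
move=> q; elim: t => [|t IH] h u ut.
  by have -> : u = 0 by lia.
case: (ltnP u t.+1) => ut'; last by have -> : u = t.+1 by lia.
apply: IH; last by lia.
move/allP: q => /(_ _ h) /and3P[h1 h2 _].
case: (ltnP 6 (6 * t.+1 + r)) => h6.
  by move: h2; rewrite h6 /= (_ : 6 * t.+1 + r - 6 = 6 * t + r) //; lia.
have e : 6 * t.+1 + r = 6 by move: h1; lia.
by move: h1; rewrite e.
Qed.

Lemma structure N (s : seq nat) :
  Qb s -> 0 \notin s -> (forall x, x \in s -> x <= N) ->
  [/\ forall x, (x \in s) = inEc (cr N s 1) (cr N s 5) (cr N s 2) (cr N s 4) x,
      cr N s 1 = 0 \/ cr N s 5 = 0 & cr N s 2 = 0 \/ cr N s 4 = 0].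
Proof.
move=> q s0 sN.
have pre : forall r t, 0 < r < 6 -> (6 * t + r \in s) = (t < cr N s r).
  move=> r t r6; case: (ltnP t N.+1) => tN.
    apply: (cnt_prefix (P := fun t => 6 * t + r \in s)) => // a b ab _ /= hb.
    exact: Qb_down hb _ ab.
  rewrite (_ : t < cr N s r = false); last first.
    by apply/negbTE; rewrite -leqNgt (leq_trans (count_iota_le _ _)).
  by apply/negbTE/negP => /sN; lia.
have no0 : forall t, 6 * t \notin s.
  move=> t; apply/negP => h; case: t h => [|t] h; first by move: s0; rewrite h.
  have := Qb_down q (r:=0) (t:=t.+1) ltac:(by rewrite addn0) (u:=1) ltac:(lia).
  by move/allP: q => q /q /and3P[].
have no3 : forall t, 6 * t + 3 \notin s.
  move=> t; apply/negP => h.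
  have := Qb_down q h (u:=0) ltac:(lia); rewrite muln0 add0n => h3.
  by move: (Qb_no3 q); rewrite h3.
have c15 : cr N s 1 = 0 \/ cr N s 5 = 0.
  case: (posnP (cr N s 1)) => h1; first by left.
  case: (posnP (cr N s 5)) => h5; first by right.
  have := pre 1 0 isT; have := pre 5 0 isT; rewrite h1 h5 !muln0 !add0n => i5 i1.
  by move/allP: q => /(_ 1 i1) /and3P[_ _]; rewrite /= i5.
have c24 : cr N s 2 = 0 \/ cr N s 4 = 0.
  case: (posnP (cr N s 2)) => h1; first by left.
  case: (posnP (cr N s 4)) => h5; first by right.
  have := pre 2 0 isT; have := pre 4 0 isT; rewrite h1 h5 !muln0 !add0n => i5 i1.
  by move/allP: q => /(_ 2 i1) /and3P[_ _]; rewrite /= i5.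
split => // x.
rewrite {1}(divn_eq x 6) /inEc.
have : x %% 6 < 6 by apply: ltn_pmod.
case: (x %% 6) => [|[|[|[|[|[|r]]]]]] // _; rewrite mulnC.
- by rewrite addn0 (negbTE (no0 _)).
- by rewrite pre //= ?orbF.
- by rewrite pre //= ?orbF.
- by rewrite (negbTE (no3 _)).
- by rewrite pre //= ?orbF.
- by rewrite pre //= ?orbF.
Qed.

Definition Elist c1 c5 c2 c4 :=
  filter (inEc c1 c5 c2 c4) (iota 0 (6 * (c1 + c5 + c2 + c4).+1)).

Lemma mem_Elist c1 c5 c2 c4 x : (x \in Elist c1 c5 c2 c4) = inEc c1 c5 c2 c4 x.
Proof.
rewrite mem_filter mem_iota add0n /=; case h: (inEc _ _ _ _ x) => //=.
move: h; rewrite /inEc; lia.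
Qed.

Lemma Elist_uniq c1 c5 c2 c4 : uniq (Elist c1 c5 c2 c4).
Proof. by rewrite filter_uniq ?iota_uniq. Qed.

Lemma sumn_filter_or (p q : pred nat) s : (forall x, ~~ (p x && q x)) ->
  sumn (filter (fun x => p x || q x) s) = sumn (filter p s) + sumn (filter q s).
Proof.
move=> d; elim: s => //= x s IH.
have := d x; case: (p x); case: (q x) => //= _; rewrite IH; lia.
Qed.

Lemma chain_sum r c : sumn (map (fun t => 6 * t + r) (iota 0 c)) = r * c + 3 * (c * c.-1).
Proof.
elim: c => [|c IH]; first by rewrite muln0.
rewrite (_ : iota 0 c.+1 = iota 0 c ++ [:: c]); last by rewrite -addn1 iotaD.
rewrite map_cat sumn_cat IH /= addn0.
case: c {IH} => [|c] /=; first by lia.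
nia.
Qed.

Lemma filter_chain r c K : r < 6 -> 6 * c <= K ->
  perm_eq (filter (fun x => (x %% 6 == r) && (x %/ 6 < c)) (iota 0 K))
          (map (fun t => 6 * t + r) (iota 0 c)).
Proof.
move=> r6 cK; apply: uniq_perm.
- by rewrite filter_uniq ?iota_uniq.
- rewrite map_inj_uniq ?iota_uniq // => a b; lia.
move=> x; rewrite mem_filter mem_iota add0n; apply/idP/idP.
  case/andP => /andP[/eqP xr xc] _; apply/mapP; exists (x %/ 6).
    by rewrite mem_iota add0n.
  by rewrite {1}(divn_eq x 6) xr mulnC.
case/mapP => t; rewrite mem_iota add0n => tc ->.
apply/andP; split; [apply/andP; split|]; lia.
Qed.

Definition F c1 c5 c2 c4 := (c1 + 3 * (c1 * c1.-1)) + (5 * c5 + 3 * (c5 * c5.-1))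
  + (2 * c2 + 3 * (c2 * c2.-1)) + (4 * c4 + 3 * (c4 * c4.-1)).

Lemma sum_Elist c1 c5 c2 c4 : sumn (Elist c1 c5 c2 c4) = F c1 c5 c2 c4.
Proof.
rewrite /Elist /inEc.
set K := 6 * _.
have d : forall (r1 r2 : nat) c c' x, r1 != r2 ->
   ~~ (((x %% 6 == r1) && (x %/ 6 < c)) && ((x %% 6 == r2) && (x %/ 6 < c'))).
  move=> r1 r2 c c' x ne; apply/negP => /andP[/andP[/eqP e1 _] /andP[/eqP e2 _]].
  by move: ne; rewrite -e1 -e2 eqxx.
rewrite sumn_filter_or; last first.
  by move=> x; case: (x %% 6 =P 1) => [e|_] //=; rewrite e /= andbF.
rewrite sumn_filter_or; last first.
  by move=> x; case: (x %% 6 =P 5) => [e|_] //=; rewrite e /= andbF.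
rewrite sumn_filter_or; last by move=> x; apply: d.
rewrite !(perm_sumn (filter_chain _ _)) //; try (rewrite /K; lia).
rewrite !chain_sum /F; lia.
Qed.

Definition xv (a b : nat) : int := if (0 < a)%N then (Posz (6 * a) - 2)%R else (- Posz (6 * b) - 2)%R.
Definition yv (a b : nat) : int := if (0 < a)%N then (Posz (6 * a) - 1)%R else (- Posz (6 * b) - 1)%R.

Lemma sq_xy a b c d : (a = 0 \/ b = 0) -> (c = 0 \/ d = 0) ->
  ((xv a b)^+2 + (yv c d)^+2 = Posz (12 * F a b c d + 5))%R.
Proof.
rewrite /xv /yv /F => hab hcd.
case: a hab => [|a] hab; case: b hab => [|b] hab //; try (by case: hab);
case: c hcd => [|c] hcd; case: d hcd => [|d] hcd //; try (by case: hcd); rewrite /= ?expr2; nia.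
Qed.

Lemma xv_mod a b : ((xv a b) %% 6)%Z = 4.
Proof. rewrite /xv; case: (0 < a)%N; lia. Qed.
Lemma yv_mod a b : ((yv a b) %% 6)%Z = 5.
Proof. rewrite /yv; case: (0 < a)%N; lia. Qed.

Lemma xv_inj a b a' b' : (a = 0 \/ b = 0) -> (a' = 0 \/ b' = 0) -> xv a b = xv a' b' ->
  a = a' /\ b = b'.
Proof. rewrite /xv; case: (posnP a) => ha; case: (posnP a') => ha' /=; lia. Qed.
Lemma yv_inj a b a' b' : (a = 0 \/ b = 0) -> (a' = 0 \/ b' = 0) -> yv a b = yv a' b' ->
  a = a' /\ b = b'.
Proof. rewrite /yv; case: (posnP a) => ha; case: (posnP a') => ha' /=; lia. Qed.

Lemma xv_surj (x : int) : (x %% 6)%Z = 4 -> exists a b, [/\ a = 0 \/ b = 0 & xv a b = x].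
Proof.
move=> hx; have [q ->] : exists q, x = (6 * q + 4)%R by exists (x %/ 6)%Z; lia.
case: (lerP 0 q) => hq.
  exists (absz q).+1, 0; split; first by right.
  rewrite /xv /=; lia.
exists 0, (absz (q + 1)%R); split; first by left.
rewrite /xv /=; lia.
Qed.
Lemma yv_surj (x : int) : (x %% 6)%Z = 5 -> exists a b, [/\ a = 0 \/ b = 0 & yv a b = x].
Proof.
move=> hx; have [q ->] : exists q, x = (6 * q + 5)%R by exists (x %/ 6)%Z; lia.
case: (lerP 0 q) => hq.
  exists (absz q).+1, 0; split; first by right.
  rewrite /yv /=; lia.
exists 0, (absz (q + 1)%R); split; first by left.
rewrite /yv /=; lia.
Qed.

Lemma mem_int_range M (x : int) : (x \in int_range M) = (- Posz M <= x <= Posz M)%R.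
Proof.
rewrite /int_range; apply/mapP/idP => [[i] | h].
  rewrite mem_iota => hi ->; lia.
exists (absz (x + Posz M)%R); first by rewrite mem_iota; lia.
lia.
Qed.

Definition P4 (n : nat) (p : int * int) : bool :=
  [&& (p.1 ^+ 2 + p.2 ^+ 2 == Posz n)%R, (p.1 %% 6)%Z == 4%Z & (p.2 %% 6)%Z == 5%Z].

Definition pairs (n : nat) : seq (int * int) := [seq (x, y) | x <- int_range n, y <- int_range n].

Definition psi N (A : {set 'I_N.+1}) : int * int :=
  (xv (cr N (vals A) 1) (cr N (vals A) 5), yv (cr N (vals A) 2) (cr N (vals A) 4)).

Lemma D6_struct N (A : {set 'I_N.+1}) : A \in D6 N ->
  let s := vals A in
  [/\ forall x, (x \in s) = inEc (cr N s 1) (cr N s 5) (cr N s 2) (cr N s 4) x,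
      cr N s 1 = 0 \/ cr N s 5 = 0, cr N s 2 = 0 \/ cr N s 4 = 0
    & F (cr N s 1) (cr N s 5) (cr N s 2) (cr N s 4) = N].
Proof.
rewrite inE inD6_iff => /and3P[s0 /eqP sN q] s.
have bnd : forall x, x \in s -> x <= N by move=> x; rewrite mem_vals => /andP[].
have [mem c15 c24] := structure q s0 bnd.
split => //.
rewrite -sum_Elist; transitivity (sumn (vals A)); last exact: sN.
apply/esym/perm_sumn/uniq_perm; rewrite ?vals_uniq ?Elist_uniq //.
by move=> x; rewrite mem_Elist mem.
Qed.

Lemma int_bound (x y : int) (n : nat) : (x ^+ 2 + y ^+ 2 = Posz n)%R -> (- Posz n <= x <= Posz n)%R.
Proof. rewrite expr2 expr2 => h; nia. Qed.

Lemma psi_in N (A : {set 'I_N.+1}) : A \in D6 N -> psi A \in filter (P4 (12 * N + 5)) (pairs (12 * N + 5)).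
Proof.
move=> hA; have [mem c15 c24 hF] := D6_struct hA.
have sq := sq_xy c15 c24; rewrite hF in sq.
rewrite mem_filter /P4 /psi /= sq eqxx xv_mod yv_mod /=.
apply: allpairs_f; rewrite mem_int_range.
  exact: (int_bound sq).
have sq' := sq; rewrite addrC in sq'; exact: (int_bound sq').
Qed.

Lemma psi_inj N (A B : {set 'I_N.+1}) : A \in D6 N -> B \in D6 N -> psi A = psi B -> A = B.
Proof.
move=> hA hB; have [memA a15 a24 _] := D6_struct hA; have [memB b15 b24 _] := D6_struct hB.
case=> /(xv_inj a15 b15) [e1 e5] /(yv_inj a24 b24) [e2 e4].
apply/setP => i.
have := memA (val i); have := memB (val i); rewrite e1 e5 e2 e4 => <-.
by rewrite !mem_vals ltn_ord /= inord_val.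
Qed.

Lemma psi_surj N p : p \in filter (P4 (12 * N + 5)) (pairs (12 * N + 5)) ->
  exists2 A, A \in D6 N & psi A = p.
Proof.
case: p => x y; rewrite mem_filter /P4 /= => /andP[/and3P[/eqP sq /eqP mx /eqP my] _].
have [a [b [hab ex]]] := xv_surj mx.
have [c [d [hcd ey]]] := yv_surj my.
have hF : F a b c d = N.
  have := sq_xy hab hcd; rewrite ex ey sq; lia.
pose A := [set i : 'I_N.+1 | inEc a b c d (val i)].
have bnd : forall v, inEc a b c d v -> v <= N.
  move=> v hv; rewrite -hF -sum_Elist; apply: elem_le_sumn; by rewrite mem_Elist.
have pm : perm_eq (vals A) (Elist a b c d).
  apply: uniq_perm; rewrite ?vals_uniq ?Elist_uniq // => v.
  rewrite mem_vals mem_Elist inE.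
  case: (ltnP v N.+1) => vN /=; first by rewrite inordK.
  by apply/esym/negP => /bnd; lia.
have memA : forall v, (v \in vals A) = inEc a b c d v by move=> v; rewrite (perm_mem pm) mem_Elist.
have hA : A \in D6 N.
  rewrite inE inD6_iff (perm_sumn pm) sum_Elist hF eqxx (Qb_perm pm) memA /=.
  apply/allP => v; rewrite mem_Elist => hv; rewrite !mem_Elist.
  move: hv; rewrite /inEc; case: hab => -> ; case: hcd => ->; lia.
have ccount : forall r e, 0 < r < 6 -> (forall t, inEc a b c d (6 * t + r) = (t < e)) ->
   cr N (vals A) r = e.
  move=> r e r6 he; rewrite /cr (eq_count (a2 := fun t => t < e)); last first.
    by move=> t /=; rewrite memA he.
  rewrite count_lt_iota subn0.
  case: (posnP e) => e0; first by rewrite e0.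
  have := bnd (6 * e.-1 + r); rewrite he; lia.
exists A => //.
rewrite /psi (ccount 1 a) // ?(ccount 5 b) // ?(ccount 2 c) // ?(ccount 4 d) // ?ex ?ey //;
  move=> t; rewrite /inEc; lia.
Qed.

Lemma int_range_uniq M : uniq (int_range M).
Proof. rewrite /int_range map_inj_uniq ?iota_uniq // => i j; lia. Qed.

Lemma pairs_uniq n : uniq (pairs n).
Proof.
rewrite /pairs allpairs_uniq ?int_range_uniq //.
by move=> [a b] [c d] _ _ /= [-> ->].
Qed.

Lemma card_D6 N : #|D6 N| = count (P4 (12 * N + 5)) (pairs (12 * N + 5)).
Proof.
rewrite cardE -(size_map (@psi N)) -size_filter.
apply: perm_size; apply: uniq_perm.
- rewrite map_inj_in_uniq ?enum_uniq // => A B; rewrite !mem_enum; exact: psi_inj.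
- by rewrite filter_uniq ?pairs_uniq.
move=> p; apply/mapP/idP => [[A]|h].
  by rewrite mem_enum => hA ->; apply: psi_in.
by have [A hA <-] := psi_surj h; exists A; rewrite ?mem_enum.
Qed.

Lemma sym_count (T : eqType) (f : T -> T) (L : seq T) (q : pred T) :
  involutive f -> (forall p, p \in L -> f p \in L) -> uniq L ->
  count q L = count (fun p => q (f p)) L.
Proof.
move=> inv pres uL.
have pe : perm_eq (map f L) L.
  apply: uniq_perm => //; first by rewrite map_inj_uniq //; apply: inv_inj.
  move=> p; apply/mapP/idP => [[r rL ->]|pL]; first exact: pres.
  by exists (f p); rewrite ?inv // pres.
by rewrite -(permP pe q) count_map.
Qed.

Lemma count_split (T : Type) (a b : pred T) s :
  count a s = count (fun x => a x && b x) s + count (fun x => a x && ~~ b x) s.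
Proof. elim: s => //= x s ->; case: (a x); case: (b x) => /=; lia. Qed.

Lemma mem_pairs n (x y : int) : ((x, y) \in pairs n) = (x \in int_range n) && (y \in int_range n).
Proof.
apply/allpairsP/andP => [[[a b] [ha hb [-> ->]]] | [hx hy]] //.
by exists (x, y).
Qed.

Lemma res6_aux (N : nat) (q w u v : int) : (0 <= u < 6)%R -> (0 <= v < 6)%R ->
  ((6 * q + u) * (6 * q + u) + (6 * w + v) * (6 * w + v) = Posz (12 * N + 5))%R ->
  ((u = 2 \/ u = 4) /\ (v = 1 \/ v = 5)) \/ ((u = 1 \/ u = 5) /\ (v = 2 \/ v = 4)).
Proof.
move=> hu hv h.
have : u = 0 \/ u = 1 \/ u = 2 \/ u = 3 \/ u = 4 \/ u = 5 by lia.
have : v = 0 \/ v = 1 \/ v = 2 \/ v = 3 \/ v = 4 \/ v = 5 by lia.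
move=> hv' hu'; clear hu hv.
move: h; case: hu' => [->|[->|[->|[->|[->|->]]]]]; case: hv' => [->|[->|[->|[->|[->|->]]]]] => h;
  first [ by left; split; [ (by left) || (by right) | (by left) || (by right) ]
        | by right; split; [ (by left) || (by right) | (by left) || (by right) ]
        | exfalso; nia ].
Qed.

Definition E2 (z : int) := ((z %% 6)%Z == 2) || ((z %% 6)%Z == 4).
Definition O6 (z : int) := ((z %% 6)%Z == 1) || ((z %% 6)%Z == 5).

Lemma resP N (x y : int) : (x ^+ 2 + y ^+ 2 == Posz (12 * N + 5))%R ->
  (E2 x && O6 y) || (O6 x && E2 y).
Proof.
move/eqP => h.
have ex : (6 * (x %/ 6)%Z + (x %% 6)%Z)%R = x by lia.
have ey : (6 * (y %/ 6)%Z + (y %% 6)%Z)%R = y by lia.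
have := @res6_aux N (x %/ 6)%Z (y %/ 6)%Z (x %% 6)%Z (y %% 6)%Z.
rewrite ex ey -!expr2 h => /(_ ltac:(lia) ltac:(lia) erefl).
rewrite /E2 /O6.
case=> [[[->|->] [->|->]]|[[->|->] [->|->]]] //.
Qed.

Definition swp (p : int * int) := (p.2, p.1).
Definition ngx (p : int * int) := ((- p.1)%R, p.2).
Definition ngy (p : int * int) := (p.1, (- p.2)%R).

Lemma range_neg n (x : int) : ((- x)%R \in int_range n) = (x \in int_range n).
Proof. rewrite !mem_int_range; lia. Qed.

Definition Pn n (p : int * int) := (p.1 ^+ 2 + p.2 ^+ 2 == Posz n)%R.
Arguments Pn : simpl never.

Lemma r2_eq N : r2 (12 * N + 5) = 8 * count (P4 (12 * N + 5)) (pairs (12 * N + 5)).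
Proof.
set n := 12 * N + 5.
pose P := Pn n.
have -> : r2 n = count P (pairs n) by [].
have uL := pairs_uniq n.
have sw : forall q, count q (pairs n) = count (fun p => q (swp p)) (pairs n).
  move=> q; apply: sym_count => //; first by case.
  by case=> x y; rewrite /swp !mem_pairs /= andbC.
have nx : forall q, count q (pairs n) = count (fun p => q (ngx p)) (pairs n).
  move=> q; apply: sym_count => //; first by case=> x y; rewrite /ngx /= opprK.
  by case=> x y; rewrite /ngx !mem_pairs /= range_neg.
have ny : forall q, count q (pairs n) = count (fun p => q (ngy p)) (pairs n).
  move=> q; apply: sym_count => //; first by case=> x y; rewrite /ngy /= opprK.
  by case=> x y; rewrite /ngy !mem_pairs /= range_neg.
have Psym : forall x y, P (y, x) = P (x, y) by move=> x y; rewrite /P /Pn /= addrC.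
have Pnx : forall x y, P ((- x)%R, y) = P (x, y) by move=> x y; rewrite /P /Pn /= sqrrN.
have Pny : forall x y, P (x, (- y)%R) = P (x, y) by move=> x y; rewrite /P /Pn /= sqrrN.
rewrite (count_split P (fun p => E2 p.1)).
have -> : count (fun p => P p && ~~ E2 p.1) (pairs n) =
          count (fun p => P p && E2 p.1) (pairs n).
  rewrite [RHS]sw; apply: eq_count => -[x y]; rewrite /swp /= (Psym x y).
  case Pxy: (P (x, y)) => //=; have := resP Pxy; rewrite /E2 /O6; lia.
rewrite (count_split (fun p => P p && E2 p.1) (fun p => (p.1 %% 6)%Z == 4)).
have -> : count (fun p => (P p && E2 p.1) && ~~ ((p.1 %% 6)%Z == 4)) (pairs n) =
          count (fun p => (P p && E2 p.1) && ((p.1 %% 6)%Z == 4)) (pairs n).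
  rewrite [RHS]nx; apply: eq_count => -[x y]; rewrite /ngx /= Pnx.
  case: (P (x, y)) => //=; rewrite /E2; lia.
rewrite (count_split (fun p => (P p && E2 p.1) && ((p.1 %% 6)%Z == 4)) (fun p => (p.2 %% 6)%Z == 5)).
have -> : count (fun p => ((P p && E2 p.1) && ((p.1 %% 6)%Z == 4)) && ~~ ((p.2 %% 6)%Z == 5)) (pairs n) =
          count (fun p => ((P p && E2 p.1) && ((p.1 %% 6)%Z == 4)) && ((p.2 %% 6)%Z == 5)) (pairs n).
  rewrite [RHS]ny; apply: eq_count => -[x y]; rewrite /ngy /= Pny.
  case Pxy: (P (x, y)) => //=; have := resP Pxy; rewrite /E2 /O6; lia.
have -> : count (fun p => ((P p && E2 p.1) && ((p.1 %% 6)%Z == 4)) && ((p.2 %% 6)%Z == 5)) (pairs n) =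
          count (P4 n) (pairs n).
  apply: eq_count => -[x y] /=; rewrite /P4 /= -/(Pn n (x, y)) -/(P (x, y)).
  case: (P (x, y)) => //=; rewrite /E2; lia.
lia.
Qed.

Theorem corollary8p18 (N : nat) :
  ((#|D6 N|)%:R = 8^-1 * (r2 (12 * N + 5))%:R :> rat)%R.
Proof.
rewrite card_D6 r2_eq natrM mulrA mulVf ?mul1r //.
Qed.
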